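(* Let $\pi$ be a set of primes, $G$ a finite group with the property $C_\pi$, $A$ a normal subgroup of $G$, $H$ a $\pi$-Hall subgroup of $G$, and assume $HA\trianglelefteq G$. Then $k_\pi^G(A)=k_\pi^{HA}(A)$.
   Context: All groups are finite. A subgroup $H$ of $G$ is a $\pi$-Hall subgroup if all prime divisors of $|H|$ lie in $\pi$ and no prime divisor of $|G:H|$ lies in $\pi$. $G$ has the property $E_\pi$ if it contains a $\pi$-Hall subgroup; $G$ has the property $C_\pi$ if it has $E_\pi$ and any two $\pi$-Hall subgroups of $G$ are conjugate in $G$. For a subnormal subgroup $A$ of a group $G$ with property $E_\pi$, a $G$-induced $\pi$-Hall subgroup of $A$ is a subgroup $K\cap A$ with $K$ a $\pi$-Hall subgroup of $G$; an $A$-class of $G$-induced $\pi$-Hall subgroups is a set $\{(K\cap A)^x\mid x\in A\}$ with $K$ a $\pi$-Hall subgroup of $G$; and $k_\pi^G(A)$ denotes the number of distinct $A$-classes of $G$-induced $\pi$-Hall subgroups of $A$. *)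

(* Defs.v *)
From mathcomp Require Import all_boot all_fingroup all_solvable.
Set Implicit Arguments. Unset Strict Implicit. Unset Printing Implicit Defensive.
Local Open Scope group_scope.

Definition E_pi (pi : nat_pred) (gT : finGroupType) (G : {set gT}) : Prop :=
  exists H : {group gT}, pi.-Hall(G) H.

Definition C_pi (pi : nat_pred) (gT : finGroupType) (G : {set gT}) : Prop :=
  E_pi pi G /\
  forall H K : {group gT}, pi.-Hall(G) H -> pi.-Hall(G) K ->
    exists2 x, x \in G & K :=: H :^ x.

Definition hall_subgroups (pi : nat_pred) (gT : finGroupType) (G : {set gT})
  : {set {group gT}} := [set K : {group gT} | pi.-Hall(G) K].

(* The A-class of G-induced pi-Hall subgroups determined by K:
   { (K :&: A) :^ x | x in A }. *)
Definition induced_class (gT : finGroupType) (K A : {set gT}) : {set {set gT}} :=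
  (K :&: A) :^: A.

Definition k_pi (pi : nat_pred) (gT : finGroupType) (G A : {set gT}) : nat :=
  #|[set induced_class (gval K) A | K in hall_subgroups pi G]|.

(* Main.v *)
Require Import Defs.
From mathcomp Require Import all_boot all_fingroup all_solvable.
Local Open Scope group_scope.

Theorem lemma7 (pi : nat_pred) (gT : finGroupType) (G A H : {group gT}) :
  C_pi pi G -> A <| G -> pi.-Hall(G) H -> H * A <| G ->
  k_pi pi G A = k_pi pi (H * A) A.
Proof.
move=> [_ conjH] nAG hallH nHAG.
have sHG := pHall_sub hallH.
have nAH : H \subset 'N(A) by apply: subset_trans sHG (normal_norm nAG).
rewrite -(norm_joinEl nAH) in nHAG *.
set M := (H <*> A)%G.
have sMG : M \subset G by exact: normal_sub nHAG.
have sHM : H \subset M by exact: joing_subl.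
have hallHM : pi.-Hall(M) H by exact: pHall_subl hallH.
suff : hall_subgroups pi G = hall_subgroups pi M by rewrite /k_pi => ->.
apply/setP=> K; rewrite !inE.
apply/idP/idP=> hK.
  have [x xG eK] := conjH H K hallH hK.
  apply: pHall_subl hK => //.
  rewrite eK /M /=; rewrite -(normsP (normal_norm nHAG) x xG).
  by rewrite conjSg.
rewrite pHallE (subset_trans (pHall_sub hK) sMG) /=.
by rewrite (card_Hall hK) -(card_Hall hallHM) (card_Hall hallH).
Qed.
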